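(* Let $\Bbbk$ be a field, $R=\Bbbk[x_1,\dots,x_m]$ with the standard $\mathbb Z^m$-grading, $P$ a finite poset, and $\deg\colon P\to\mathbb N^m$ a morphism of posets. Let $\widehat{\mathcal F}_\bullet$ be the homogenization of $\mathcal C_\bullet(P,\Bbbk)$ with respect to $\deg$, and let $I\subseteq R$ be the monomial ideal generated by $x^{\deg a}$ for $a$ minimal in $P$. Then $\widehat{\mathcal F}_\bullet$, augmented by the map $\widehat F_0\to I$ sending $[a]\otimes 1\mapsto x^{\deg a}$ for each minimal $a\in P$, is a free resolution of $I$ if and only if the augmented conic chain complex $\widetilde{\mathcal C}_\bullet(P_{\deg\le\alpha},\Bbbk)$ is exact for every $\alpha\in\mathbb Z^m$ such that $P_{\deg\le\alpha}$ is nonempty.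
   Context: For a finite poset $P$ and $a\in P$: $P_{\le a}=\{x: x\le a\}$, $P_{<a}=\{x:x<a\}$, $\Delta(S)$ the order complex, $d(a)=\dim\Delta(P_{\le a})$, $P^n=\{a: d(a)\le n\}$, $\Delta^n=\Delta(P^n)$ ($\Delta^{-1}=\emptyset$), faces oriented by decreasing order of vertices. Conic chain complex: $\mathcal C_n(P,\Bbbk)=H_n(\Delta^n,\Delta^{n-1};\Bbbk)=\bigoplus_{d(a)=n}H_n(\Delta(P_{\le a}),\Delta(P_{<a});\Bbbk)$ for $n\ge0$, with differential $\partial_n=\iota_{n-1}\circ\delta_n$ ($\delta_n$ the connecting map of the pair $(\Delta^n,\Delta^{n-1})$, $\iota_{n-1}\colon\widetilde H_{n-1}(\Delta^{n-1})\to H_{n-1}(\Delta^{n-1},\Delta^{n-2})$ the natural map). Note $\mathcal C_0(P,\Bbbk)=\bigoplus_{a\in P^0}\Bbbk[a]$ where $P^0$ is the set of minimal elements. The augmented conic chain complex $\widetilde{\mathcal C}_\bullet(P,\Bbbk)$ adds $\mathcal C_{-1}=\Bbbk\cdot[\,]$ (the empty face) and $\partial_0([a])=[\,]$. $\mathcal C_\bullet(P,\Bbbk)$ is $P$-graded: $F_{n,a}=H_{n}(\Delta(P_{\le a}),\Delta(P_{<a});\Bbbk)$ if $n=d(a)$ and $0$ otherwise; for $x\in F_{n,a}$ write $f_n^b(x)$ for the component of $\partial_n(x)$ in $F_{n-1,b}$ (nonzero only if $b\le a$). The homogenization with respect to $\deg$ is the complex of $\mathbb Z^m$-graded $R$-modules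 with $\widehat F_n=\bigoplus_{a\in P}F_{n,a}\otimes_\Bbbk R(-\deg a)$ and $\hat f_n(x\otimes1)=\sum_{b\le a}f_n^b(x)\otimes x^{\deg a-\deg b}$ for $x\in F_{n,a}$. For $\alpha\in\mathbb Z^m$, $P_{\deg\le\alpha}=\{x\in P:\deg x\le\alpha\}$ (componentwise order) with the induced order. *)

(* Defs.v *)
From HB Require Import structures.
From mathcomp Require Import all_boot all_order all_algebra.
Set Implicit Arguments. Unset Strict Implicit. Unset Printing Implicit Defensive.
Import Order.TTheory GRing.Theory.
Local Open Scope ring_scope.

(* Exponent vectors in N^m (monomials x^beta of R = K[x_1..x_m]). *)
Definition mon (m : nat) := {ffun 'I_m -> nat}.
Definition mle (m : nat) (a b : mon m) : bool := [forall i, (a i <= b i)%N].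
Definition madd (m : nat) (a b : mon m) : mon m := [ffun i => (a i + b i)%N].
Definition msub (m : nat) (a b : mon m) : mon m := [ffun i => (a i - b i)%N].

Section Conic.
Variables (disp : Order.disp_t) (T : finPOrderType disp) (K : fieldType).

(* simplicial chains (k-valued functions on faces = finite subsets of T) *)
Definition chainK := {ffun {set T} -> K}.

(* faces of the order complex: totally ordered subsets *)
Definition is_chain (c : {set T}) : bool :=
  [forall x in c, forall y in c, (x <= y)%O || (y <= x)%O].

Definition topis (a : T) (c : {set T}) : bool :=
  (a \in c) && [forall u in c, (u <= a)%O].

Definition minimal (a : T) : bool := [forall b, (b <= a)%O ==> (b == a)].

(* d_S(a) = dim Delta(S_{<= a}) for the subposet S (induced order), a in S *)
Definition dim_below (S : {set T}) (a : T) : nat :=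
  (\max_(c : {set T} | [&& c \subset S, is_chain c & [forall x in c, (x <= a)%O]])
      #|c|.-1)%N.

(* n-faces of Delta^n(S) = Delta(S^n) *)
Definition face_in (S : {set T}) (n : nat) (c : {set T}) : bool :=
  [&& c \subset S, is_chain c, #|c| == n.+1
    & [forall x in c, (dim_below S x <= n)%N]].

(* n-faces of Delta^n(S) not lying in Delta^{n-1}(S) (Delta^{-1} = empty) *)
Definition rel_face (S : {set T}) (n : nat) (c : {set T}) : bool :=
  face_in S n c && ~~ [forall x in c, (dim_below S x < n)%N].

(* simplicial boundary, faces oriented by decreasing order of vertices:
   removing vertex v contributes (-1)^(number of vertices above v) *)
Definition bd (c : chainK) (t : {set T}) : K :=
  \sum_(s : {set T}) \sum_(v in s | t == s :\ v)
     (-1) ^+ #|[set u in s | (v < u)%O]| * c s.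

(* C_n(S,K) = H_n(Delta^n, Delta^{n-1}; K), realised as the relative n-cycles
   (there are no relative (n+1)-chains, so no boundaries to quotient by):
   n-chains supported on faces of Delta^n not in Delta^{n-1} whose boundary
   vanishes on the (n-1)-faces of Delta^n not in Delta^{n-1}. *)
Definition conic (S : {set T}) (n : nat) (c : chainK) : Prop :=
  (forall s : {set T}, c s != 0 -> rel_face S n s) /\
  (forall t : {set T}, (0 < n)%N ->
     [&& t \subset S, is_chain t, #|t| == n,
         [forall x in t, (dim_below S x <= n)%N]
       & ~~ [forall x in t, (dim_below S x < n)%N]] ->
     bd c t = 0).

(* conic differential partial_n = iota_{n-1} o delta_n (n >= 1): the boundary,
   read in H_{n-1}(Delta^{n-1},Delta^{n-2}) i.e. restricted to the faces of
   Delta^{n-1} not in Delta^{n-2}. *)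
Definition Dc (S : {set T}) (n : nat) (c : chainK) : chainK :=
  [ffun t => if rel_face S n.-1 t then bd c t else 0].

(* exactness of the augmented conic chain complex of the subposet S;
   C_{-1} = K.[ ] and partial_0 [a] = [ ], i.e. partial_0 c = bd c set0 *)
Definition aug_conic_exact (S : {set T}) : Prop :=
  (forall l : K, exists c, conic S 0 c /\ bd c set0 = l) /\
  (forall c, conic S 0 c ->
     (bd c set0 = 0 <-> exists c', conic S 1 c' /\ Dc S 1 c' = c)) /\
  (forall n c, (0 < n)%N -> conic S n c ->
     (Dc S n c = 0 <-> exists c', conic S n.+1 c' /\ Dc S n.+1 c' = c)).

Variables (m : nat) (deg : T -> mon m).

Definition Fna (n : nat) (a : T) (c : chainK) : Prop :=
  conic setT n c /\ (forall s : {set T}, c s != 0 -> topis a s).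

Definition fb (b : T) (c : chainK) : chainK :=
  [ffun t => if topis b t then c t else 0].

(* An element of hat F_n = (+)_a F_{n,a} (x)_K R(-deg a) is a family
   h a beta in F_{n,a} (coefficient of x^beta in the a-summand),
   finitely supported in beta. *)
Definition homF (n : nat) (h : T -> mon m -> chainK) : Prop :=
  (forall a beta, Fna n a (h a beta)) /\
  (exists s : seq (mon m), forall a beta, beta \notin s -> h a beta = 0).

(* hat f_n (x (x) x^beta) = sum_{b <= a} f^b(x) (x) x^(beta + deg a - deg b) *)
Definition fhat (n : nat) (h : T -> mon m -> chainK) : T -> mon m -> chainK :=
  fun b gamma =>
    \sum_(a | (b <= a)%O && mle (msub (deg a) (deg b)) gamma)
        fb b (Dc setT n (h a (msub gamma (msub (deg a) (deg b))))).

(* R = K[x_1..x_m]: a polynomial is its (finitely supported) coefficient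
   function mon m -> K.  Augmentation [a] (x) x^beta |-> x^(beta + deg a). *)
Definition eps (h : T -> mon m -> chainK) : mon m -> K :=
  fun gamma => \sum_(a | minimal a && mle (deg a) gamma)
                 h a (msub gamma (deg a)) [set a].

Definition inI (p : mon m -> K) : Prop :=
  exists r : T -> mon m -> K,
    (exists s : seq (mon m), forall a beta, beta \notin s -> r a beta = 0) /\
    (forall gamma, p gamma =
       \sum_(a | minimal a && mle (deg a) gamma) r a (msub gamma (deg a))).

(* hat F, augmented by eps : hat F_0 -> I, is a free resolution of I
   (the modules are free by construction): exactness everywhere. *)
Definition is_free_resolution : Prop :=
  (forall h, homF 0 h -> inI (eps h)) /\
  (forall p, inI p -> exists h, homF 0 h /\ forall gamma, eps h gamma = p gamma) /\
  (forall h, homF 0 h ->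
     ((forall gamma, eps h gamma = 0) <->
      exists h', homF 1 h' /\ forall a beta, fhat 1 h' a beta = h a beta)) /\
  (forall n h, (0 < n)%N -> homF n h ->
     ((forall a beta, fhat n h a beta = 0) <->
      exists h', homF n.+1 h' /\ forall a beta, fhat n.+1 h' a beta = h a beta)).

End Conic.

Definition Pdeg_le (disp : Order.disp_t) (T : finPOrderType disp) (m : nat)
  (deg : T -> mon m) (alpha : 'I_m -> int) : {set T} :=
  [set x | [forall i, ((deg x i)%:Z <= alpha i)%R]].

(* Main.v *)
Require Import Defs.
From HB Require Import structures.
From mathcomp Require Import all_boot all_order all_algebra.
From mathcomp Require Import zify.
From Stdlib Require Import Classical ClassicalEpsilon.
Set Implicit Arguments. Unset Strict Implicit. Unset Printing Implicit Defensive.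
Import Order.TTheory GRing.Theory.

Section Aux.
Variables (disp : Order.disp_t) (T : finPOrderType disp) (K : fieldType).

Local Notation chainK := (chainK T K).

Lemma topis_uniq (a b : T) s : topis a s -> topis b s -> a = b.
Proof.
case/andP=> ain /forall_inP ha; case/andP=> bin /forall_inP hb.
by apply/le_anti; rewrite ha ?hb.
Qed.

Lemma chain_top (s : {set T}) : is_chain s -> s != set0 -> exists a, topis a s.
Proof.
move=> ch /set0Pn [a0 a0s].
pose F (a : T) := #|[set u | (u <= a)%O]|.
case: (arg_maxnP F a0s) => a ains amax.
exists a; apply/andP; split => //; apply/forall_inP => u us.
move/forall_inP: ch => /(_ u us) /forall_inP /(_ a ains) /orP [//|au].
case: (eqVneq u a) => [->//|nua].
have : #|[set w | (w <= a)%O]| < #|[set w | (w <= u)%O]|.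
  apply: proper_card; apply/properP; split.
    by apply/subsetP => w; rewrite !inE => wa; apply: le_trans au.
  exists u; first by rewrite inE.
  rewrite inE; apply/negP => ua; move/negP: nua; apply; exact/eqP/le_anti/andP.
by move: (amax u us); rewrite /F; lia.
Qed.

Lemma exists_minimal (x : T) : exists2 a, (a <= x)%O & minimal a.
Proof.
pose F (a : T) := #|[set u | (u <= a)%O]|.
case: (@arg_minnP _ x (fun a => (a <= x)%O) F (lexx x)) => a ax amin.
exists a => //; apply/forallP => b; apply/implyP => ba.
case: (eqVneq b a) => // nba.
have : #|[set w | (w <= b)%O]| < #|[set w | (w <= a)%O]|.
  apply: proper_card; apply/properP; split.
    by apply/subsetP => w; rewrite !inE => wa; apply: le_trans ba.
  exists a; first by rewrite inE.
  rewrite inE; apply/negP => ab; move/negP: nba; apply; exact/eqP/le_anti/andP.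
by move: (amin b (le_trans ba ax)); rewrite /F; lia.
Qed.

Lemma chain_add_top (c : {set T}) w :
  is_chain c -> (forall z, z \in c -> (z <= w)%O) -> is_chain (w |: c).
Proof.
move=> /forall_inP ch hw; apply/forall_inP => x; rewrite in_setU1 => /orP hx.
apply/forall_inP => y; rewrite in_setU1 => /orP hy.
case: hx => [/eqP->|xc]; case: hy => [/eqP->|yc].
- by rewrite lexx.
- by rewrite hw // orbT.
- by rewrite hw.
- by move/forall_inP: (ch x xc) => /(_ y yc).
Qed.

Lemma dim_lt (S : {set T}) y a :
  (y < a)%O -> y \in S -> a \in S -> dim_below S y < dim_below S a.
Proof.
move=> ya yS aS.
set P := fun c : {set T} => [&& c \subset S, is_chain c & [forall x in c, (x <= y)%O]].
have P0 : P set0.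
  by rewrite /P sub0set /is_chain /=; apply/andP; split; apply/forallP => x; rewrite inE.
rewrite /dim_below (bigop.bigmax_eq_arg set0 P0).
set c := [arg max_(i > set0 | _) _].
have : P c by rewrite /c; case: (arg_maxnP (fun c : {set T} => #|c|.-1) P0).
clearbody c; case/and3P => cS cch /forall_inP cy.
have ych : is_chain (y |: c) by apply: chain_add_top.
have ya' := ltW ya.
have ach : is_chain (a |: (y |: c)).
  apply: chain_add_top => // z; rewrite in_setU1 => /orP [/eqP->//|zc].
  exact: le_trans (cy z zc) ya'.
have anin : a \notin y |: c.
  rewrite in_setU1 negb_or; apply/andP; split.
    by apply/eqP => e; move: ya; rewrite e ltxx.
  apply/negP => ac; have := cy a ac => ay.
  by move: (lt_le_trans ya ay); rewrite ltxx.
have Pc : [&& a |: (y |: c) \subset S, is_chain (a |: (y |: c))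
         & [forall x in a |: (y |: c), (x <= a)%O]].
  rewrite ach /= !subUset !sub1set aS yS cS /=.
  apply/forallP => z; apply/implyP; rewrite !in_setU1 => /orP [/eqP->|/orP [/eqP->//|zc]].
    by [].
  exact: le_trans (cy z zc) ya'.
have := bigop.leq_bigmax_cond (P := fun c : {set T} => [&& c \subset S, is_chain c & [forall x in c, (x <= a)%O]]) (F := fun c : {set T} => #|c|.-1) _ Pc.
rewrite cardsU1 anin /=.
have h1 : #|c| <= #|y |: c| by apply: subset_leq_card; apply: subsetUr.
have h2 : 0 < #|y |: c| by apply/card_gt0P; exists y; rewrite setU11.
move=> H; apply: leq_trans H; rewrite add0n.
have aux : forall j k, j <= k -> 0 < k -> j.-1 < k by move=> j k; lia.
exact: aux.
Qed.

Lemma minimal_dim0 (S : {set T}) (a : T) : minimal a -> dim_below S a = 0.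
Proof.
move=> /forallP am; apply/eqP; rewrite -leqn0; apply/bigmax_leqP => c /and3P [_ _ /forall_inP ca].
have : c \subset [set a].
  by apply/subsetP => z zc; rewrite inE; move/implyP: (am z); apply; exact: ca.
move/subset_leq_card; rewrite cards1; lia.
Qed.

Lemma dim0_minimal (a : T) : dim_below setT a = 0 -> minimal a.
Proof.
move=> d0; apply/forallP => b; apply/implyP => ba.
case: (eqVneq b a) => // nba.
have : (b < a)%O by rewrite lt_neqAle nba ba.
move/(dim_lt (S := setT)); rewrite !inE d0 => /(_ isT isT).
by [].
Qed.

End Aux.


Section Aux2.
Variables (disp : Order.disp_t) (T : finPOrderType disp) (K : fieldType).

Local Notation chainK := (chainK T K).
Local Open Scope ring_scope.

Lemma bdD (c1 c2 : chainK) t : bd (c1 + c2) t = bd c1 t + bd c2 t.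
Proof.
rewrite /bd -big_split; apply: eq_bigr => s _; rewrite -big_split.
by apply: eq_bigr => v _; rewrite ffunE mulrDr.
Qed.

Lemma bd0 t : bd (0 : chainK) t = 0.
Proof. by rewrite /bd big1 // => s _; rewrite big1 // => v _; rewrite ffunE mulr0. Qed.

Lemma bd_sum I (r : seq I) (P : pred I) (F : I -> chainK) t :
  bd (\sum_(i <- r | P i) F i) t = \sum_(i <- r | P i) bd (F i) t.
Proof. exact: (big_morph (fun c => bd c t) (fun x y => bdD x y t) (bd0 t)). Qed.

Lemma DcD S n (c1 c2 : chainK) : Dc S n (c1 + c2) = Dc S n c1 + Dc S n c2.
Proof. by apply/ffunP => t; rewrite !ffunE bdD; case: ifP; rewrite ?addr0. Qed.

Lemma Dc0 S n : Dc S n (0 : chainK) = 0.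
Proof. by apply/ffunP => t; rewrite !ffunE bd0; case: ifP. Qed.

Lemma Dc_sum S n I (r : seq I) (P : pred I) (F : I -> chainK) :
  Dc S n (\sum_(i <- r | P i) F i) = \sum_(i <- r | P i) Dc S n (F i).
Proof. exact: (big_morph (Dc S n) (DcD S n) (Dc0 S n)). Qed.

Lemma fbD b (c1 c2 : chainK) : fb b (c1 + c2) = fb b c1 + fb b c2.
Proof. by apply/ffunP => t; rewrite !ffunE; case: ifP; rewrite ?addr0. Qed.

Lemma fb0 b : fb b (0 : chainK) = 0.
Proof. by apply/ffunP => t; rewrite !ffunE; case: ifP. Qed.

Lemma fb_sum b I (r : seq I) (P : pred I) (F : I -> chainK) :
  fb b (\sum_(i <- r | P i) F i) = \sum_(i <- r | P i) fb b (F i).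
Proof. exact: (big_morph (fb b) (fbD b) (fb0 b)). Qed.

Lemma bd_supp (c : chainK) t :
  bd c t != 0 -> exists s v, [/\ c s != 0, v \in s & t = s :\ v].
Proof.
move=> H; apply/not_all_not_ex => hn; move/eqP: H; apply.
apply: big1 => s _; apply: big1 => v /andP [vs /eqP ts].
case: (eqVneq (c s) 0) => [->|cs]; first by rewrite mulr0.
by case: (hn s); exists v; split.
Qed.

Lemma set1_of (s : {set T}) v : (v \in s) && (set0 == s :\ v) = (s == [set v]).
Proof.
apply/idP/idP.
  case/andP => vs; rewrite eq_sym => /eqP e.
  apply/eqP/setP => u; rewrite inE; apply/idP/idP => [us|/eqP->//].
  apply/negPn/negP => uv; have : u \in s :\ v by rewrite !inE uv us.
  by rewrite e inE.
by move/eqP->; rewrite set11 /= setDv eqxx.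
Qed.

Lemma bd_set0 (c : chainK) : bd c set0 = \sum_v c [set v].
Proof.
rewrite /bd.
have E : forall s : {set T},
  \sum_(v in s | set0 == s :\ v) (-1) ^+ #|[set u in s | (v < u)%O]| * c s
  = \sum_(v | s == [set v]) c [set v].
  move=> s; apply: eq_big => [v|v]; first exact: set1_of.
  rewrite set1_of => /eqP ->.
  have -> : [set u in [set v] | (v < u)%O] = set0.
    by apply/setP => u; rewrite !inE; apply/negP => /andP [/eqP -> ]; rewrite ltxx.
  by rewrite cards0 expr0 mul1r.
rewrite (eq_bigr _ (fun s _ => E s)) (exchange_big_dep xpredT) //=.
by apply: eq_bigr => v _; rewrite (big_pred1 [set v]).
Qed.

Lemma conic0 S n : conic S n (0 : chainK).
Proof. by split=> [s|t _ _]; rewrite ?ffunE ?eqxx // bd0. Qed.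

Lemma conicD S n (c1 c2 : chainK) : conic S n c1 -> conic S n c2 -> conic S n (c1 + c2).
Proof.
move=> [h1 g1] [h2 g2]; split=> [s|t n0 ht].
  rewrite ffunE; case: (eqVneq (c1 s) 0) => [->|/h1//]; rewrite add0r; exact: h2.
by rewrite bdD g1 // g2 // addr0.
Qed.

Lemma conic_sum S n I (r : seq I) (P : pred I) (F : I -> chainK) :
  (forall i, P i -> conic S n (F i)) -> conic S n (\sum_(i <- r | P i) F i).
Proof.
move=> H; elim/big_rec: _ => [|i x Pi cx]; first exact: conic0.
exact: conicD (H i Pi) cx.
Qed.

Definition downset (S : {set T}) := forall x y : T, (x <= y)%O -> y \in S -> x \in S.

Lemma dim_eq S x : downset S -> x \in S -> dim_below S x = dim_below setT x.
Proof.
move=> dS xS; rewrite /dim_below; apply: eq_bigl => c; rewrite subsetT /=.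
apply/idP/idP => [/and3P [_ -> ->] //| /andP [ch cxb]].
apply/and3P; split => //; apply/subsetP => z zc.
move/forall_inP: cxb => cx; exact: dS (cx z zc) xS.
Qed.

Lemma forall_dim_eq (s : {set T}) S (f : nat -> bool) :
  (forall x, x \in s -> dim_below S x = dim_below setT x) ->
  [forall x in s, f (dim_below S x)] = [forall x in s, f (dim_below setT x)].
Proof.
move=> E; apply: eq_forallb => x; apply/implyP/implyP => H xs.
  by rewrite -E //; exact: H.
by rewrite E //; exact: H.
Qed.

Lemma rel_face_eq S k (s : {set T}) : downset S -> s \subset S -> rel_face S k s = rel_face setT k s.
Proof.
move=> dS sS; have E : forall x, x \in s -> dim_below S x = dim_below setT x.
  by move=> x xs; apply: dim_eq => //; exact: (subsetP sS).
rewrite /rel_face /face_in sS subsetT /=.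
rewrite (forall_dim_eq (fun d => d <= k)%N E).
by rewrite (forall_dim_eq (fun d => d < k)%N E).
Qed.

Lemma rel_face_sub S k (s : {set T}) : rel_face S k s -> s \subset S.
Proof. by case/andP => /and4P []. Qed.

Lemma rel_face_chain S k (s : {set T}) : rel_face S k s -> is_chain s.
Proof. by case/andP => /and4P []. Qed.

Lemma rel_face_card S k (s : {set T}) : rel_face S k s -> #|s| = k.+1.
Proof. by case/andP => /and4P [_ _ /eqP]. Qed.

Lemma rel_face_top S k (s : {set T}) : rel_face S k s -> exists a, topis a s.
Proof.
move=> rf; apply: chain_top; first exact: rel_face_chain rf.
by rewrite -card_gt0 (rel_face_card rf).
Qed.

Lemma bd_sub (c : chainK) (t : {set T}) : bd c t != 0 -> exists s, c s != 0 /\ t \subset s.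
Proof.
case/bd_supp => s [v [cs vs ->]]; exists s; split => //; exact: subD1set.
Qed.

Lemma conic_setT S n (c : chainK) : downset S -> (forall s, c s != 0 -> s \subset S) ->
  conic S n c <-> conic setT n c.
Proof.
move=> dS cS; split=> [[h g]|[h g]]; split.
- by move=> s cs; rewrite -(rel_face_eq _ dS (cS s cs)); exact: h.
- move=> t n0 ht; apply/eqP/negP => /negP bt.
  have [s [cs ts]] := bd_sub bt.
  have tS : t \subset S by apply: subset_trans ts (cS s cs).
  move/eqP: bt; apply; apply: g => //.
  move: ht; rewrite subsetT tS /=.
  have E : forall x, x \in t -> dim_below S x = dim_below setT x.
    by move=> x xt; apply: dim_eq => //; exact: (subsetP tS).
  rewrite (forall_dim_eq (fun d => d <= n)%N E).
  by rewrite (forall_dim_eq (fun d => d < n)%N E).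
- by move=> s cs; rewrite (rel_face_eq _ dS (cS s cs)); exact: h.
- move=> t n0 ht; apply: g => //.
  move: ht => /andP [tS ht]; rewrite subsetT /=.
  have E : forall x, x \in t -> dim_below S x = dim_below setT x.
    by move=> x xt; apply: dim_eq => //; exact: (subsetP tS).
  by rewrite -(forall_dim_eq (fun d => d <= n)%N E) -(forall_dim_eq (fun d => d < n)%N E).
Qed.

End Aux2.


Section Aux3.
Variables (disp : Order.disp_t) (T : finPOrderType disp) (K : fieldType).

Local Notation chainK := (chainK T K).
Local Open Scope ring_scope.

Lemma topis_in (a : T) s : topis a s -> a \in s.
Proof. by case/andP. Qed.

Lemma topis_le (a : T) s x : topis a s -> x \in s -> (x <= a)%O.
Proof. by case/andP => _ /forall_inP; apply. Qed.

Lemma topis_sub (a0 a : T) (s t : {set T}) :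
  topis a0 s -> a0 \in t -> t \subset s -> topis a t = topis a s.
Proof.
move=> t0 a0t ts; apply/idP/idP => ta.
  have as_ : a \in s by apply: (subsetP ts); exact: topis_in ta.
  have e : a0 = a by apply/le_anti; rewrite (topis_le ta a0t) (topis_le t0 as_).
  by rewrite -e.
have e := topis_uniq ta t0; subst a0.
apply/andP; split => //; apply/forall_inP => x xt; apply: topis_le ta _.
exact: (subsetP ts).
Qed.

Lemma conic_fb (S : {set T}) n (c : chainK) (a : T) : conic S n c -> conic S n (fb a c).
Proof.
case=> h g; split.
  move=> s; rewrite ffunE; case: ifP => _; [exact: h | by rewrite eqxx].
move=> t n0 ht.
have key : forall s v, c s != 0 -> v \in s -> t = s :\ v -> topis a s = topis a t.
  move=> s v cs vs ts; have rf := h s cs; have [a0 ta0] := rel_face_top rf.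
  have a0v : a0 != v.
    apply/eqP => e; subst v.
    case/and5P: ht => _ _ _ _ /forall_inPn [y yt ny].
    move: (rf) => /andP [/and4P [sS _ _ /forall_inP dimle] _].
    have ys : y \in s by move: yt; rewrite ts !inE => /andP [].
    have ya0 : y != a0 by move: yt; rewrite ts !inE => /andP [].
    have ylt : (y < a0)%O by rewrite lt_neqAle ya0 (topis_le ta0 ys).
    have := dim_lt ylt (subsetP sS y ys) (subsetP sS a0 (topis_in ta0)).
    have := dimle a0 (topis_in ta0).
    move: ny; rewrite -leqNgt; lia.
  have a0t : a0 \in t by rewrite ts !inE a0v (topis_in ta0).
  symmetry; apply: topis_sub ta0 a0t _; rewrite ts; exact: subD1set.
transitivity (if topis a t then bd c t else 0); last by case: ifP => // _; apply: g.
rewrite /bd; case: ifP => tat.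
  apply: eq_bigr => s _; apply: eq_bigr => v /andP [vs /eqP ts]; rewrite ffunE.
  case: (eqVneq (c s) 0) => [->|cs]; first by case: ifP; rewrite ?mulr0.
  by rewrite (key s v cs vs ts) tat.
apply: big1 => s _; apply: big1 => v /andP [vs /eqP ts]; rewrite ffunE.
case: (eqVneq (c s) 0) => [->|cs]; first by case: ifP; rewrite ?mulr0.
by rewrite (key s v cs vs ts) tat mulr0.
Qed.

Lemma fb_decomp (P : pred T) (c : chainK) :
  (forall s, c s != 0 -> exists2 a, topis a s & P a) -> c = \sum_(a | P a) fb a c.
Proof.
move=> H; apply/ffunP => s; rewrite sum_ffunE.
case: (eqVneq (c s) 0) => [cs0|cs].
  by rewrite cs0 big1 // => a _; rewrite ffunE cs0; case: ifP.
have [a ta Pa] := H s cs.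
rewrite (bigD1 a) //= ffunE ta big1 ?addr0 //.
move=> b /andP [_ ba]; rewrite ffunE.
case: ifP => // tb; by move: ba; rewrite (topis_uniq ta tb) eqxx.
Qed.

Lemma fb_single (a b : T) (c : chainK) :
  (forall s, c s != 0 -> topis a s) -> fb b c = if a == b then c else 0.
Proof.
move=> H; apply/ffunP => s; rewrite ffunE; case: (eqVneq a b) => [<-|nab].
  by case: (eqVneq (c s) 0) => [->|/H ->]; rewrite ?if_same.
rewrite ffunE; case: ifP => // tbs; case: (eqVneq (c s) 0) => [//|/H tas].
by move: nab; rewrite (topis_uniq tas tbs) eqxx.
Qed.

Lemma fb_Dc_le (S : {set T}) n (a b : T) (c : chainK) :
  (forall s, c s != 0 -> topis a s) -> ~~ (b <= a)%O -> fb b (Dc S n c) = 0.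
Proof.
move=> H nba; apply/ffunP => t; rewrite !ffunE; case: ifP => // tb; case: ifP => // _.
apply/eqP/negP => /negP /bd_sub [s [cs ts]].
have ta := H s cs.
by move: nba; rewrite (topis_le ta (subsetP ts b (topis_in tb))).
Qed.

Lemma fb_Dc_out (S : {set T}) n (b : T) (c : chainK) : b \notin S -> fb b (Dc S n c) = 0.
Proof.
move=> bS; apply/ffunP => t; rewrite !ffunE; case: ifP => // tb; case: ifP => // /rel_face_sub tS.
by move: bS; rewrite (subsetP tS b (topis_in tb)).
Qed.

Lemma Dc_top (S : {set T}) n (c : chainK) t : Dc S n c t != 0 -> exists2 a, topis a t & a \in S.
Proof.
rewrite ffunE; case: ifP => [rf _|]; last by rewrite eqxx.
have [a ta] := rel_face_top rf.
exists a => //; exact: (subsetP (rel_face_sub rf) a (topis_in ta)).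
Qed.

Lemma Dc_eq (S : {set T}) n (c : chainK) : downset S -> (forall s, c s != 0 -> s \subset S) ->
  Dc S n c = Dc setT n c.
Proof.
move=> dS cS; apply/ffunP => t; rewrite !ffunE.
case: (eqVneq (bd c t) 0) => [->|bt]; first by do 2 case: ifP.
have [s [cs ts]] := bd_sub bt.
by rewrite (rel_face_eq _ dS (subset_trans ts (cS s cs))).
Qed.

End Aux3.


Lemma mle_refl m (a : mon m) : mle a a.
Proof. by apply/forallP => i. Qed.

Lemma mle_trans m (a b c : mon m) : mle a b -> mle b c -> mle a c.
Proof.
move=> /forallP ab /forallP bc; apply/forallP => i; exact: leq_trans (ab i) (bc i).
Qed.

Lemma aux_subK (x y : nat) : x <= y -> y - x + x = y. Proof. lia. Qed.
Lemma aux_addK (x y : nat) : y + x - x = y. Proof. lia. Qed.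
Lemma aux_inj (a x y : nat) : a <= x -> a <= y -> x - a = y - a -> x = y. Proof. lia. Qed.
Lemma aux_subLR (x y g : nat) : (x - y <= g) = (x <= g + y).
Proof. apply/idP/idP; lia. Qed.
Lemma aux_subsub (x y g : nat) : y <= x -> g - (x - y) = g + y - x. Proof. lia. Qed.

Lemma msubK m (a d : mon m) : mle a d -> madd (msub d a) a = d.
Proof.
move=> /forallP ad; apply/ffunP => i; rewrite /madd /msub !ffunE; exact: aux_subK.
Qed.

Lemma maddK m (a b : mon m) : msub (madd b a) a = b.
Proof. by apply/ffunP => i; rewrite /madd /msub !ffunE aux_addK. Qed.

Lemma msub_inj m (a d d' : mon m) : mle a d -> mle a d' -> msub d a = msub d' a -> d = d'.
Proof.
move=> /forallP h1 /forallP h2 e; apply/ffunP => i.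
apply: (aux_inj (h1 i) (h2 i)); have := congr1 (fun f : mon m => f i) e.
by rewrite /msub /= !ffunE.
Qed.

Lemma mle_sub m (x y g : mon m) : mle (msub x y) g = mle x (madd g y).
Proof. by apply: eq_forallb => i; rewrite /madd /msub !ffunE aux_subLR. Qed.

Lemma msub_msub m (x y g : mon m) : mle y x -> msub g (msub x y) = msub (madd g y) x.
Proof.
move=> /forallP yx; apply/ffunP => i; rewrite /madd /msub !ffunE; exact: aux_subsub.
Qed.

Lemma sum_neq0 (V : nmodType) (I : finType) (P : pred I) (F : I -> V) :
  (\sum_(i | P i) F i != 0)%R -> exists2 i, P i & (F i != 0)%R.
Proof.
move=> H; case: (pickP (fun i => P i && (F i != 0)%R)) => [i /andP [Pi Fi]|none].
  by exists i.
move/eqP: H; case; apply: big1 => i Pi; move: (none i); rewrite Pi /=.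
by move/negbFE/eqP.
Qed.

Section Strand.
Variables (disp : Order.disp_t) (T : finPOrderType disp) (K : fieldType).
Variables (m : nat) (deg : T -> mon m).
Hypothesis deg_mono : forall x y : T, (x <= y)%O -> mle (deg x) (deg y).

Local Notation chainK := (chainK T K).
Local Open Scope ring_scope.

Definition Sd (d : mon m) : {set T} := [set x | mle (deg x) d].

Definition emb (d : mon m) (c : chainK) : T -> mon m -> chainK :=
  fun a b => if mle (deg a) d && (b == msub d (deg a)) then fb a c else 0.

Definition proj (d : mon m) (h : T -> mon m -> chainK) : chainK :=
  \sum_(a | mle (deg a) d) h a (msub d (deg a)).

Lemma Sd_down d : downset (Sd d).
Proof. move=> x y xy; rewrite !inE; exact: mle_trans (deg_mono xy). Qed.

Lemma homF_supp n (h : T -> mon m -> chainK) (a : T) b s : homF n h -> h a b s != 0 -> topis a s.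
Proof. by case=> H _; case: (H a b) => _; apply. Qed.

Lemma homF_conic n (h : T -> mon m -> chainK) (a : T) b : homF n h -> conic setT n (h a b).
Proof. by case=> H _; case: (H a b). Qed.

Lemma top_sub (S : {set T}) (a : T) s : downset S -> a \in S -> topis a s -> s \subset S.
Proof. move=> dS aS ta; apply/subsetP => x xs; exact: dS (topis_le ta xs) aS. Qed.

Lemma conic_sub (S : {set T}) n (c : chainK) s : conic S n c -> c s != 0 -> s \subset S.
Proof. by case=> H _ /H /rel_face_sub. Qed.

Lemma conic_top (S : {set T}) n (c : chainK) s : conic S n c -> c s != 0 ->
  exists2 a, topis a s & a \in S.
Proof.
case=> H _ /H rf; have [a ta] := rel_face_top rf; exists a => //.
exact: (subsetP (rel_face_sub rf) a (topis_in ta)).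
Qed.

Lemma proj_conic n (h : T -> mon m -> chainK) d : homF n h -> conic (Sd d) n (proj d h).
Proof.
move=> hh; apply: conic_sum => a ad.
have aS : a \in Sd d by rewrite inE.
have HS : forall s, h a (msub d (deg a)) s != 0 -> s \subset Sd d.
  move=> s /(homF_supp hh).
exact: top_sub (@Sd_down d) aS.
apply: (proj2 (conic_setT n (@Sd_down d) HS)); exact: homF_conic hh.
Qed.

Lemma proj_supp n (h : T -> mon m -> chainK) d s : homF n h -> proj d h s != 0 -> exists2 a, topis a s & a \in Sd d.
Proof.
move=> hh; rewrite sum_ffunE => /sum_neq0 [a ad /(homF_supp hh) ta].
by exists a; rewrite ?inE.
Qed.

Lemma emb_homF n d (c : chainK) : conic (Sd d) n c -> homF n (emb d c).
Proof.
move=> cc; split.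
  move=> a b; rewrite /emb; case: ifP => _; last first.
    by split; [exact: conic0 | move=> s; rewrite ffunE eqxx].
  split; last by move=> s; rewrite ffunE; case: ifP => //; rewrite eqxx.
  have HS : forall s, fb a c s != 0 -> s \subset Sd d.
    move=> s; rewrite ffunE; case: ifP => _; last by rewrite eqxx.
    exact: conic_sub cc.
  apply: (proj1 (conic_setT n (@Sd_down d) HS)); exact: conic_fb.
exists [seq msub d (deg a) | a <- enum T] => a b nb; rewrite /emb.
case: ifP => // /andP [_ /eqP e]; move: nb; rewrite e.
by move/negP; case; apply/mapP; exists a; rewrite ?mem_enum.
Qed.

Lemma proj_emb n d d' (c : chainK) : conic (Sd d) n c ->
  proj d' (emb d c) = if d' == d then c else 0.
Proof.
move=> cc; rewrite /proj /emb; case: (eqVneq d' d) => [->|ne].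
  rewrite (eq_bigr (fun a => fb a c)); last by move=> a ->; rewrite eqxx.
  symmetry; apply: fb_decomp => s cs; have [a ta] := conic_top cc cs.
  by rewrite inE; exists a.
apply: big1 => a ad'; case: ifP => // /andP [ad /eqP e].
by move: ne; rewrite (msub_inj ad' ad e) eqxx.
Qed.

Lemma fb_proj n (h : T -> mon m -> chainK) d (a : T) : homF n h -> mle (deg a) d ->
  fb a (proj d h) = h a (msub d (deg a)).
Proof.
move=> hh ad; rewrite /proj fb_sum (bigD1 a) //=.
rewrite (fb_single _ (fun s => homF_supp (a := a) (b := msub d (deg a)) (s := s) hh)) eqxx.
rewrite big1 ?addr0 // => b /andP [_ ba].
by rewrite (fb_single _ (fun s => homF_supp (a := b) (b := msub d (deg b)) (s := s) hh)) (negbTE ba).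
Qed.

Lemma fb_proj_out n (h : T -> mon m -> chainK) d (a : T) : homF n h -> ~~ mle (deg a) d -> fb a (proj d h) = 0.
Proof.
move=> hh ad; rewrite /proj fb_sum big1 // => b bd.
rewrite (fb_single _ (fun s => homF_supp (a := b) (b := msub d (deg b)) (s := s) hh)).
by case: eqP => // e; move: ad; rewrite -e bd.
Qed.

Lemma fhat_proj n (h : T -> mon m -> chainK) (b : T) g : homF n h ->
  fhat deg n h b g = fb b (Dc (Sd (madd g (deg b))) n (proj (madd g (deg b)) h)).
Proof.
move=> hh; set d := madd g (deg b).
rewrite /proj Dc_sum fb_sum (bigID (fun a => (b <= a)%O)) /=.
rewrite [X in _ + X]big1 ?addr0; last first.
  move=> a /andP [_ nba].
  exact: (fb_Dc_le (a := a) _ _ (fun s => homF_supp (a := a) (b := msub d (deg a)) (s := s) hh)).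
rewrite /fhat; apply: eq_big => [a|a /andP [ba ag]].
  by rewrite mle_sub andbC.
rewrite (msub_msub _ (deg_mono ba)) -/d.
rewrite (Dc_eq n (@Sd_down d)) // => s /(homF_supp hh) ta.
by apply: top_sub (@Sd_down d) _ ta; rewrite inE -mle_sub.
Qed.

Lemma eps_proj (h : T -> mon m -> chainK) g : homF 0 h -> eps deg h g = bd (proj g h) set0.
Proof.
move=> hh; rewrite /eps /proj bd_sum big_mkcondl /=.
apply: eq_bigr => a ad; rewrite bd_set0.
rewrite (bigD1 a) //= big1 ?addr0; last first.
  move=> v va; apply/eqP/negP => /negP /(homF_supp hh) tv.
  by move: (topis_in tv); rewrite inE => /eqP e; move: va; rewrite e eqxx.
case: ifP => // nm; apply/eqP; rewrite eq_sym; apply/negP => /negP nz.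
have [H _] := homF_conic a (msub g (deg a)) hh.
case/andP: (H _ nz) => /and4P [_ _ _ /forall_inP dl] _.
have := dl a (set11 a); rewrite leqn0 => /eqP /dim0_minimal.
by rewrite nm.
Qed.

Definition kerR n (h : T -> mon m -> chainK) : Prop :=
  if n is 0 then forall g, eps deg h g = 0 else forall a b, fhat deg n h a b = 0.

Definition kerC (S : {set T}) n (c : chainK) : Prop :=
  if n is 0 then bd c set0 = 0 else Dc S n c = 0.

Lemma ext0 (x : chainK) : (forall s, x s != 0 -> exists2 a, topis a s & a \in [set: T]) ->
  (forall b, fb b x = 0) -> x = 0.
Proof.
move=> sx H; rewrite (fb_decomp sx) big1 // => b _; exact: H.
Qed.

Lemma ext2 (x y : chainK) :
  (forall s, x s != 0 -> exists a, topis a s) ->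
  (forall s, y s != 0 -> exists a, topis a s) ->
  (forall b, fb b x = fb b y) -> x = y.
Proof.
move=> sx sy H.
have sx' : forall s, x s != 0 -> exists2 a, topis a s & a \in [set: T].
  by move=> s /sx [a ta]; exists a; rewrite ?inE.
have sy' : forall s, y s != 0 -> exists2 a, topis a s & a \in [set: T].
  by move=> s /sy [a ta]; exists a; rewrite ?inE.
rewrite (fb_decomp sx') (fb_decomp sy'); apply: eq_bigr => b _; exact: H.
Qed.

Lemma mle_addl (a b : mon m) : mle a (madd b a).
Proof. by apply/forallP => i; rewrite /madd ffunE leq_addl. Qed.

Lemma ker_strand n (h : T -> mon m -> chainK) : homF n h ->
  (kerR n h <-> forall d, kerC (Sd d) n (proj d h)).
Proof.
move=> hh; case: n hh => [|k] hh /=.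
  split=> H d; first by rewrite -eps_proj //; exact: H.
  by rewrite eps_proj //; exact: H.
split=> H.
  move=> d; apply: ext0.
    by move=> s /Dc_top [a ta _]; exists a; rewrite ?inE.
  move=> b; case: (boolP (mle (deg b) d)) => bd.
    by have := fhat_proj b (msub d (deg b)) hh; rewrite msubK // => <-; exact: H.
  by apply: fb_Dc_out; rewrite inE.
by move=> a b; rewrite fhat_proj // H fb0.
Qed.

Lemma img_strand n (h h' : T -> mon m -> chainK) : homF n h -> homF n.+1 h' ->
  ((forall a b, fhat deg n.+1 h' a b = h a b) <->
   forall d, Dc (Sd d) n.+1 (proj d h') = proj d h).
Proof.
move=> hh hh'; split=> H.
  move=> d; apply: ext2.
  - by move=> s /Dc_top [a ta _]; exists a.
  - by move=> s /(proj_supp hh) [a ta _]; exists a.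
  move=> b; case: (boolP (mle (deg b) d)) => bd.
    have := fhat_proj b (msub d (deg b)) hh'; rewrite msubK // => <-.
    by rewrite H (fb_proj hh).
  by rewrite fb_Dc_out ?inE // (fb_proj_out hh).
by move=> a b; rewrite fhat_proj // H (fb_proj hh) ?maddK // mle_addl.
Qed.

Lemma kerC0 (S : {set T}) n : kerC S n (0 : chainK).
Proof. by case: n => [|k] /=; rewrite ?bd0 ?Dc0. Qed.

Lemma topis1 (a : T) : topis a [set a].
Proof. by rewrite /topis set11 /=; apply/forall_inP => x; rewrite inE => /eqP ->. Qed.

Lemma rel_face_min (S : {set T}) (a : T) : a \in S -> minimal a -> rel_face S 0 [set a].
Proof.
move=> aS ma; rewrite /rel_face /face_in sub1set aS cards1 /=.
apply/andP; split.
  apply/andP; split.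
    by apply/forall_inP => x; rewrite inE => /eqP ->; apply/forall_inP => y; rewrite inE => /eqP ->; rewrite lexx.
  by apply/forall_inP => x; rewrite inE => /eqP ->; rewrite minimal_dim0.
by apply/forall_inPn; exists a; rewrite ?set11.
Qed.

Lemma LR : is_free_resolution K deg -> forall d, Sd d != set0 -> aug_conic_exact K (Sd d).
Proof.
move=> Hres d ne.
have key : forall n c, conic (Sd d) n c ->
    (kerC (Sd d) n c <-> exists c', conic (Sd d) n.+1 c' /\ Dc (Sd d) n.+1 c' = c).
  move=> n c cc; have hh := emb_homF cc.
  have resR : kerR n (emb d c) <->
      exists h', homF n.+1 h' /\ forall a b, fhat deg n.+1 h' a b = emb d c a b.
    case: Hres => _ [_ [H0 Hn]]; case: n {cc} hh => [|k] hh /=; first exact: H0 hh.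
    exact: Hn.
  split.
    move=> kc; have kr : kerR n (emb d c).
      apply/(ker_strand hh) => d'; rewrite (proj_emb d' cc); case: eqP => [->//|_].
      exact: kerC0.
    have [h' [hh' E]] := resR.1 kr.
    have E' := (img_strand hh hh').1 E d.
    exists (proj d h'); split; first exact: proj_conic.
    by rewrite E' (proj_emb d cc) eqxx.
  case=> c' [cc' E]; have hh' := emb_homF cc'.
  have E2 : forall a b, fhat deg n.+1 (emb d c') a b = emb d c a b.
    apply/(img_strand hh hh') => d'; rewrite (proj_emb d' cc') (proj_emb d' cc).
    by case: eqP => [->|_]; [exact: E | exact: Dc0].
  have kr := resR.2 (ex_intro _ _ (conj hh' E2)).
  by have := (ker_strand hh).1 kr d; rewrite (proj_emb d cc) eqxx.
split.
  move=> l; case/set0Pn: ne => x xS.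
  have [a ax ma] := exists_minimal x.
  have aS : a \in Sd d by apply: (@Sd_down d) ax xS.
  exists [ffun s => if s == [set a] then l else 0]; split.
    split=> [s|t]; last by [].
    by rewrite ffunE; case: (eqVneq s [set a]) => [->|_]; [move=> _; exact: rel_face_min | rewrite eqxx].
  rewrite bd_set0 (bigD1 a) //= ffunE eqxx big1 ?addr0 // => v va.
  rewrite ffunE; case: eqP => // /set1_inj e; by move: va; rewrite e eqxx.
split; first exact: (key 0).
by move=> n c n0 cc; case: n n0 cc => [//|k] _ cc; exact: (key k.+1).
Qed.

Lemma RL : (forall d, Sd d != set0 -> aug_conic_exact K (Sd d)) -> is_free_resolution K deg.
Proof.
move=> Hc.
have Cd : forall d n c, conic (Sd d) n c ->
    (kerC (Sd d) n c <-> exists c', conic (Sd d) n.+1 c' /\ Dc (Sd d) n.+1 c' = c).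
  move=> d n c cc; case: (eqVneq (Sd d) set0) => [e|ne].
    have -> : c = 0.
      apply/ffunP => s; rewrite ffunE; apply/eqP/negP => /negP nz.
      by have [a _] := conic_top cc nz; rewrite e inE.
    split=> _; last exact: kerC0.
    by exists 0; split; [exact: conic0 | exact: Dc0].
  have [_ [H0 Hn]] := Hc d ne.
  by case: n cc => [|k] cc /=; [exact: H0 | exact: Hn].
have key : forall n h, homF n h ->
    (kerR n h <-> exists h', homF n.+1 h' /\ forall a b, fhat deg n.+1 h' a b = h a b).
  move=> n h hh; split.
    move=> kh; have kd := (ker_strand hh).1 kh.
    have ex : forall d, exists c', conic (Sd d) n.+1 c' /\ Dc (Sd d) n.+1 c' = proj d h.
      by move=> d; apply/(Cd d n _ (proj_conic d hh)).
    pose g d := proj1_sig (constructive_indefinite_description _ (ex d)).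
    have Hg : forall d, conic (Sd d) n.+1 (g d) /\ Dc (Sd d) n.+1 (g d) = proj d h.
      by move=> d; rewrite /g; case: constructive_indefinite_description.
    pose h' (a : T) (b : mon m) : chainK :=
      if proj (madd b (deg a)) h == 0 then 0 else fb a (g (madd b (deg a))).
    have hh' : homF n.+1 h'.
      split.
        move=> a b; rewrite /h'; case: ifP => _.
          by split; [exact: conic0 | move=> s; rewrite ffunE eqxx].
        set dd := madd b (deg a).
        split; last by move=> s; rewrite ffunE; case: ifP => //; rewrite eqxx.
        have HS : forall s, fb a (g dd) s != 0 -> s \subset Sd dd.
          move=> s; rewrite ffunE; case: ifP => _; last by rewrite eqxx.
          exact: conic_sub (Hg dd).1.
        apply: (proj1 (conic_setT n.+1 (@Sd_down dd) HS)); exact: conic_fb (Hg dd).1.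
      case: hh => _ [s Hs].
      pose D := [seq madd x (deg a') | x <- s, a' <- enum T].
      exists [seq msub y (deg a) | y <- D, a <- enum T] => a b nb.
      rewrite /h'; case: eqP => // /eqP pn; exfalso; move/negP: nb; apply.
      set dd := madd b (deg a) in pn.
      have [t] : exists t, proj dd h t != 0.
        by apply/existsP; move: pn; apply: contraR; move/existsPn => H; apply/eqP/ffunP => t; rewrite ffunE; apply/eqP/negPn.
      rewrite sum_ffunE => /sum_neq0 [a' ad' nz].
      have ins : msub dd (deg a') \in s.
        by apply/negPn/negP => /Hs e; move: nz; rewrite e ffunE eqxx.
      have inD : dd \in D.
        by rewrite /D -{1}(msubK ad'); apply: allpairs_f; rewrite ?mem_enum.
      have -> : b = msub dd (deg a) by rewrite maddK.
      by apply: allpairs_f; rewrite ?mem_enum.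
    exists h'; split => //; apply/(img_strand hh hh') => d.
    have -> : proj d h' = if proj d h == 0 then 0 else \sum_(a | mle (deg a) d) fb a (g d).
      rewrite {1}/proj /h'; case: eqP => [e|ne].
        by apply: big1 => a ad; rewrite msubK // e eqxx.
      by apply: eq_bigr => a ad; rewrite msubK //; case: eqP => // /ne.
    case: eqP => [->|_]; first exact: Dc0.
    rewrite -(fb_decomp (P := fun a => mle (deg a) d)); first exact: (Hg d).2.
    by move=> s /(conic_top (Hg d).1) [a ta]; rewrite inE; exists a.
  case=> h' [hh' E]; apply/(ker_strand hh) => d.
  have E' := (img_strand hh hh').1 E d.
  apply/(Cd d n _ (proj_conic d hh)); exists (proj d h'); split => //.
  exact: proj_conic.
split.
  move=> h hh; exists (fun a b => h a b [set a]); split => //.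
  by case: hh => _ [s Hs]; exists s => a b nb; rewrite Hs // ffunE.
split.
  move=> p [r [[s Hs] Hp]].
  exists (fun a b => [ffun t => if minimal a && (t == [set a]) then r a b else 0]).
  split.
    split.
      move=> a b; split; last first.
        by move=> t; rewrite ffunE; case: ifP => [/andP [_ /eqP ->] _|]; [exact: topis1 | rewrite eqxx].
      split=> [t|t]; last by [].
      rewrite ffunE; case: ifP => [/andP [ma /eqP ->] _|]; last by rewrite eqxx.
      exact: rel_face_min.
    by exists s => a b nb; apply/ffunP => t; rewrite !ffunE Hs // if_same.
  move=> g; rewrite Hp /eps; apply: eq_bigr => a /andP [ma _].
  by rewrite ffunE ma eqxx.
split; first exact: (key 0).
by move=> n h n0 hh; case: n n0 hh => [//|k] _ hh; exact: (key k.+1).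
Qed.

End Strand.


Unset Implicit Arguments.

Theorem mainTheorem3 (disp : Order.disp_t) (T : finPOrderType disp)
  (K : fieldType) (m : nat) (deg : T -> mon m)
  (deg_mono : forall x y : T, (x <= y)%O -> mle (deg x) (deg y)) :
  is_free_resolution K deg <->
  (forall alpha : 'I_m -> int,
     Pdeg_le deg alpha != set0 ->
     aug_conic_exact K (Pdeg_le deg alpha)).
Proof.
split.
  move=> Hres alpha ne; case/set0Pn: (ne) => x xP.
  pose d : mon m := [ffun i => `|alpha i|%N].
  have E : Pdeg_le deg alpha = Sd deg d.
    apply/setP => y; rewrite !inE /mle; apply: eq_forallb => i; rewrite ffunE.
    move: xP; rewrite inE => /forallP /(_ i) xi.
    have a0 : (0 <= alpha i)%R by apply: Order.POrderTheory.le_trans xi.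
    by rewrite -lez_nat abszE ?(gez0_abs a0) ?(Num.Theory.ger0_norm a0).
  rewrite E; apply: (LR deg_mono Hres); rewrite -E //.
move=> H; apply: (RL deg_mono) => d ne.
have E : Pdeg_le deg (fun i => Posz (d i)) = Sd deg d.
  by apply/setP => y; rewrite !inE; apply: eq_forallb => i; rewrite lez_nat.
rewrite -E; apply: H; rewrite E //.
Qed.
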